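(* Let $A$ be a finite combinatorial annulus and $r$ a $b$-weakly bounded refinement. Then $\mathrm{EEL}(rA)\le b^2\,\mathrm{EEL}(A)$.
   Context: Graphs are simple, connected, locally finite. A combinatorial annulus is the 1-skeleton (with its triangular cell structure) of a triangulated topological annulus in the plane, i.e. a region whose boundary is two disjoint Jordan curves, one enclosing the other. An edge path is a sequence of edges $[v_0,v_1],[v_1,v_2],\dots$; $\mathrm{EEL}(A)$ is the extremal length of the family of edge paths connecting the two boundary components of $A$, using metrics on edges: a metric $m:E\to[0,\infty)$ has area $\sum_e m(e)^2$, the length of a path is the sum of $m$ over its edges, and $\mathrm{EEL}=\sup_m (\inf_\gamma L_m(\gamma))^2/\mathrm{area}(m)$ over metrics of finite non-zero area. Refinement: for planar complexes $G=(V,E,F)$ and $rG=(rV,rE,rF)$, $rG$ is a refinement of $G$ if $V\subset rV$ and each edge $e=[x,y]\in E$ corresponds to a path $x=w_0,w_1,\dots,w_n=y$ in $rG$ with $[w_j,w_{j+1}]\in rE$ and $w_j\notin V$ for $0<j<n$. Write $\mathrm{eInc}_r(e)=\{[w_0,w_1],\dots,[w_{n-1},w_n]\}$. $r$ is $b$-weakly bounded if $|\mathrm{eInc}_r(e)|\le b$ for all $e\in E$. *)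

(* Defs.v *)
From HB Require Import structures.
From mathcomp Require Import all_boot all_order all_algebra.
From mathcomp Require Import all_classical all_reals all_analysis.

Set Implicit Arguments.
Unset Strict Implicit.
Unset Printing Implicit Defensive.

Import Order.TTheory GRing.Theory Num.Theory numFieldNormedType.Exports.
Local Open Scope classical_set_scope.
Local Open Scope ring_scope.

Notation pt R := (Real.sort R * Real.sort R)%type.

Section PlaneTopology.
Variable R : realType.
Local Notation pt := (pt R).

Definition I01 : set R := [set t | 0 <= t <= 1].

Definition is_arc (g : R -> pt) : Prop :=
  {within I01, continuous g} /\
  (forall s t, I01 s -> I01 t -> g s = g t -> s = t).

Definition arc_img (g : R -> pt) : set pt := g @` I01.

Definition jordan_curve (J : set pt) : Prop :=
  exists g : R -> pt,
    [/\ {within I01, continuous g}, g 0 = g 1,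
        (forall s t, 0 <= s < 1 -> 0 <= t < 1 -> g s = g t -> s = t)
      & J = g @` I01].

Definition bounded_pts (S : set pt) : Prop :=
  exists M : R, forall p, S p -> `|p.1| <= M /\ `|p.2| <= M.

(** Points in a bounded component of the complement of [J]
    (for a Jordan curve: the region enclosed by [J]). *)
Definition inside (J : set pt) : set pt :=
  [set p | ~ J p /\ bounded_pts (connected_component (~` J) p)].

Definition closed_annulus (Om Jin Jout : set pt) : Prop :=
  [/\ jordan_curve Jin, jordan_curve Jout, Jin `&` Jout = set0
    & Jin `<=` inside Jout] /\
  [/\ Om = closure (interior Om), connected (interior Om)
    & Om `\` interior Om = Jin `|` Jout].

End PlaneTopology.

(** Data of an embedded, triangulated finite planar complex whose underlying
    space is meant to be a closed annulus [tOm] with boundary curves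
    [tJin], [tJout]. *)
Unset Implicit Arguments.
Record tri_data (R : realType) := TriData {
  tV : finType;
  tadj : rel tV;                     (* adjacency (edges of the 1-skeleton) *)
  tpos : tV -> pt R;
  tarc : tV -> tV -> R -> pt R;      (* the arc realising the edge [x,y] *)
  tF : {set {set tV}};               (* triangular faces *)
  tOm : set (pt R);                  (* the closed annulus *)
  tJin : set (pt R);
  tJout : set (pt R)
}.
Arguments tV {R}. Arguments tadj {R}. Arguments tpos {R}. Arguments tarc {R}.
Arguments tF {R}. Arguments tOm {R}. Arguments tJin {R}. Arguments tJout {R}.
Set Implicit Arguments.

Section Triangulated.
Variable R : realType.
Variable A : tri_data R.

Definition edge_img (x y : tV A) : set (pt R) := arc_img (tarc A x y).

Definition face_curve (f : {set tV A}) : set (pt R) :=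
  [set p | exists x y, [/\ x \in f, y \in f, tadj A x y & edge_img x y p]].

Definition face_int (f : {set tV A}) : set (pt R) := inside (face_curve f).

Definition face_region (f : {set tV A}) : set (pt R) :=
  face_curve f `|` face_int f.

Definition is_comb_annulus : Prop :=
  symmetric (tadj A) /\ irreflexive (tadj A) /\
  injective (tpos A) /\ (forall v, tOm A (tpos A v)) /\
      (forall x y, tadj A x y ->
         [/\ is_arc (tarc A x y), tarc A x y 0 = tpos A x,
             tarc A x y 1 = tpos A y, edge_img x y = edge_img y x
           & edge_img x y `<=` tOm A]) /\
      (forall x y z, tadj A x y -> edge_img x y (tpos A z) -> z = x \/ z = y) /\
      (forall x y u v p, tadj A x y -> tadj A u v ->
         edge_img x y p -> edge_img u v p ->
         [set x; y]%SET = [set u; v]%SET \/ exists z, p = tpos A z) /\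
      (forall f, f \in tF A ->
         #|f| = 3 /\ {in f &, forall x y, x != y -> tadj A x y}) /\
      (forall x y, tadj A x y -> exists2 f, f \in tF A & x \in f /\ y \in f) /\
      (forall f, f \in tF A ->
         (forall z, ~ face_int f (tpos A z)) /\
         (forall x y, tadj A x y -> face_int f `&` edge_img x y = set0)) /\
      (forall f g, f \in tF A -> g \in tF A -> f != g ->
         face_int f `&` face_int g = set0) /\
      tOm A = \bigcup_(f in [set f | f \in tF A]) face_region f /\
  closed_annulus (tOm A) (tJin A) (tJout A).

Definition bd_in : set (tV A) := [set v | tJin A (tpos A v)].
Definition bd_out : set (tV A) := [set v | tJout A (tpos A v)].

End Triangulated.

Section EEL.
Variable R : realType.
Variables (V : finType) (adj : rel V) (B1 B2 : set V).

Definition is_edge (e : {set V}) : bool :=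
  [exists x, exists y, adj x y && (e == [set x; y]%SET)].

(** A metric assigns a value to each edge (edges are 2-element sets). *)
Definition area (m : {set V} -> R) : R :=
  \sum_(e : {set V} | is_edge e) m e ^+ 2.

Definition path_len (m : {set V} -> R) (v0 : V) (p : seq V) : R :=
  \sum_(e <- pairmap (fun x y => [set x; y]%SET) v0 p) m e.

Definition connecting (v0 : V) (p : seq V) : Prop :=
  [/\ path adj v0 p, B1 v0 & B2 (last v0 p)].

Definition min_len (m : {set V} -> R) : R :=
  inf [set l | exists v0 p, connecting v0 p /\ l = path_len m v0 p].

Definition admissible_metric (m : {set V} -> R) : Prop :=
  (forall e, is_edge e -> 0 <= m e) /\ area m != 0.

Definition EEL : \bar R :=
  ereal_sup [set ((min_len m) ^+ 2 / area m)%:E | m in admissible_metric].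

End EEL.

Definition EEL_ann (R : realType) (A : tri_data R) : \bar R :=
  EEL R (tadj A) (@bd_in R A) (@bd_out R A).

(** [rA] is a refinement of [A] which is [b]-weakly bounded: both are
    triangulations of the same annulus, V is contained in rV (same points),
    and each edge [x,y] of A is realised by an edge path
    x = w_0, ..., w_n = y of rA with interior vertices not in V, whose arcs
    make up the arc of [x,y]; the set eInc of edges of this path has at most
    [b] elements. *)
Definition weakly_bounded_refinement (R : realType) (A rA : tri_data R)
    (b : nat) : Prop :=
  exists (iota : tV A -> tV rA) (rp : tV A -> tV A -> seq (tV rA)),
  [/\ injective iota, (forall v, tpos rA (iota v) = tpos A v)
    & [/\ tOm rA = tOm A, tJin rA = tJin A & tJout rA = tJout A]] /\
  forall x y, tadj A x y ->
    (* x = w_0, w_1, ..., w_n = y, with rp x y = [:: w_1; ...; w_n] *)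
    [/\ path (tadj rA) (iota x) (rp x y),
        last (iota x) (rp x y) = iota y,
        (* w_j is not in V for 0 < j < n *)
        (forall i, (i.+1 < size (rp x y))%N -> forall v,
           nth (iota x) (rp x y) i != iota v),
        edge_img x y =
          \bigcup_(i in [set i | (i < size (rp x y))%N])
             edge_img (nth (iota x) (iota x :: rp x y) i)
                      (nth (iota x) (rp x y) i)
      &
        (#|[set e in pairmap (fun u w => [set u; w]%SET) (iota x) (rp x y)]%SET|
          <= b)%N].

(* Main.v *)
Require Import Defs.
From mathcomp Require Import all_boot all_order all_algebra.
From mathcomp Require Import all_classical all_reals all_analysis.
From mathcomp Require Import ring lra.
Import Order.TTheory GRing.Theory Num.Theory numFieldNormedType.Exports.
Local Open Scope classical_set_scope.
Local Open Scope ring_scope.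
Section Topo.
Variable R : realType.
Local Notation pt := (pt R).

Lemma ball_R_connected (x e : R) : connected (ball x e).
Proof. rewrite ball_itv; apply/connected_intervalP; exact: interval_is_interval. Qed.

Lemma cont_pairl (a : R) : continuous (fun t : R => ((a, t) : pt)).
Proof. move=> t. exact: (@cvg_pair _ _ _ (nbhs t) (nbhs a) (nbhs t) _ _ _ (fun _ => a) id (cvg_cst a) cvg_id). Qed.

Lemma cont_pairr (a : R) : continuous (fun t : R => ((t, a) : pt)).
Proof. move=> t. exact: (@cvg_pair _ _ _ (nbhs t) (nbhs t) (nbhs a) _ _ _ id (fun _ => a) cvg_id (cvg_cst a)). Qed.

Lemma ball_pt_connected (q : pt) e : 0 < e -> connected (ball q e).
Proof.
move=> e0.
have -> : ball q e = \bigcup_(a in ball q.1 e)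
   ((fun t : R => ((a, t) : pt)) @` ball q.2 e `|`
    (fun t : R => ((t, q.2) : pt)) @` ball q.1 e).
  apply/seteqP; split.
    move=> [y1 y2] [/= b1 b2]; exists y1 => //; left; by exists y2.
  move=> y [a ba [[t bt <-]|[t bt <-]]]; split => //=.
  exact: ballxx.
apply: bigcup_connected.
  exists q => a ba; right; exists q.1; first exact: ballxx.
  by case: q {ba}.
move=> a ba; apply: connectedU.
- exists (a, q.2); split; first by exists q.2 => //; exact: ballxx.
  by exists a.
- apply: connected_continuous_connected; first exact: ball_R_connected.
  exact/continuous_subspaceT/cont_pairl.
- apply: connected_continuous_connected; first exact: ball_R_connected.
  exact/continuous_subspaceT/cont_pairr.
Qed.

Lemma local_conn (J : set pt) q : closed J -> ~ J q ->
  exists2 N, nbhs q N & connected N /\ N `<=` ~` J.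
Proof.
move=> cJ nJq.
have : nbhs q (~` J) by apply: open_nbhs_nbhs; split => //; exact: closed_openC.
move=> /nbhs_ballP [e /= e0 be]; exists (ball q e); first exact: nbhsx_ballx.
by split => //; exact: ball_pt_connected.
Qed.

Lemma inside_open (J : set pt) : closed J -> open (inside J).
Proof.
move=> cJ; rewrite openE => p [nJp bd].
have [N Np [cN NJ]] := local_conn J p cJ nJp.
have pN := nbhs_singleton Np.
apply: filterS Np => q Nq.
have Cq : connected_component (~` J) p q.
  exact: (connected_component_max pN NJ cN).
split; first exact: NJ.
by rewrite -(same_connected_component Cq).
Qed.

Lemma closure_inside (J : set pt) : closed J -> closure (inside J) `<=` inside J `|` J.
Proof.
move=> cJ q clq; have [Jq|nJq] := pselect (J q); first by right.
left; have [N Nq [cN NJ]] := local_conn J q cJ nJq.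
have [p [[nJp bd] Np]] := clq _ Nq.
have Cq : connected_component (~` J) p q.
  exact: (connected_component_max Np NJ cN (nbhs_singleton Nq)).
split => //; by rewrite -(same_connected_component Cq).
Qed.

Lemma closed_inside_U (J : set pt) : closed J -> closed (J `|` inside J).
Proof.
move=> cJ; rewrite closure_id; apply/seteqP; split; first exact: subset_closure.
rewrite closureU => q [|].
  by rewrite -(iffLR (closure_id J) cJ); left.
by move/(closure_inside J cJ) => [] ; [right|left].
Qed.

Lemma I01E : @I01 R = `[(0:R), 1]%classic.
Proof. by apply/seteqP; split => t; rewrite /I01 /= in_itv. Qed.

Lemma arc_closed (g : R -> pt) : {within @I01 R, continuous g} -> closed (arc_img g).
Proof.
move=> cg; apply: compact_closed; first exact: norm_hausdorff.
apply: continuous_compact => //; rewrite I01E; exact: segment_compact.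
Qed.

Lemma arc_connected (g : R -> pt) : {within @I01 R, continuous g} -> connected (arc_img g).
Proof.
move=> cg; apply: connected_continuous_connected => //; rewrite I01E.
exact: segment_connected.
Qed.
Lemma I01_closed : closed (@I01 R).
Proof. rewrite I01E; exact: interval_closed. Qed.

Lemma I01_compact : compact (@I01 R).
Proof. rewrite I01E; exact: segment_compact. Qed.

Lemma jordan_not_in_arc (g : R -> pt) (J : set pt) :
  is_arc g -> jordan_curve J -> J `<=` arc_img g -> False.
Proof.
move=> [cg ig] [h [ch h01 ih eJ]] sub.
have ex : forall t, exists s, @I01 R t -> @I01 R s /\ g s = h t.
  move=> t; have [It|nIt] := pselect (@I01 R t); last by exists 0.
  have : arc_img g (h t) by apply: sub; rewrite eJ; exists t.
  by case=> s Is gs; exists s.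
have [phi Hphi] := choice ex.
have cphi : {within @I01 R, continuous phi}.
  apply/subspace_continuousP => t It.
  have [Ip gp] := Hphi t It.
  apply/cvgrPdist_lt => e e0.
  pose C := @I01 R `\` ball (phi t) e.
  have cC : compact C.
    apply: (subclosed_compact _ I01_compact); last by move=> x [].
    apply: closedI; first exact: I01_closed.
    apply: open_closedC; exact: ball_open.
  have clK : closed (g @` C).
    apply: compact_closed; first exact: norm_hausdorff.
    apply: continuous_compact => //.
    by apply: continuous_subspaceW cg => x [].
  have nK : ~ (g @` C) (h t).
    move=> [c [Ic nbc] gc]; apply: nbc.
    have -> : c = phi t by apply: ig => //; rewrite gc gp.
    exact: ballxx.
  have hK : h x @[x --> within (@I01 R) (nbhs t)] --> h t.
    by move/subspace_continuousP : ch; apply.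
  have := hK (~` (g @` C)) (open_nbhs_nbhs (conj (closed_openC clK) nK)).
  move=> /= nKw.
  apply: (filter_app _ _ (withinT (@I01 R) (nbhs_filter t))).
  have nKw2 : within (@I01 R) (nbhs t) (h @^-1` (~` (g @` C))) := nKw.
  apply: filterS nKw2 => x nKx Ix.
  have [Ix' gx] := Hphi x Ix.
  apply: contrapT => nb; apply: nKx; exists (phi x) => //; split => //.
have I0 : @I01 R 0 by rewrite /I01 /= lexx ler01.
have I1 : @I01 R 1 by rewrite /I01 /= lexx ler01.
have Ih : @I01 R (1/2) by rewrite /I01 /=; apply/andP; split; lra.
have [I0' g0] := Hphi 0 I0.
have [I1' g1] := Hphi 1 I1.
have [Ih' gh] := Hphi _ Ih.
have p01 : phi 0 = phi 1 by apply: ig => //; rewrite g0 g1.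
have ph0 : phi (1/2) != phi 0.
  apply/eqP => e; have E : h (1/2) = h 0 by rewrite -gh -g0 e.
  have H12 : 0 <= (1/2 : R) < 1 by apply/andP; split; lra.
  have H0 : 0 <= (0 : R) < 1 by rewrite lexx ltr01.
  have := ih _ _ H12 H0 E; lra.
set c := (phi 0 + phi (1/2)) / 2.
have mid (a b : R) : Num.min a b <= (a + b) / 2 <= Num.max a b.
  rewrite ge_min le_max; case: (leP a b) => ab; apply/andP; split; apply/orP;
   (try by left; lra); by right; lra.
have sub1 : `[0, 1/2]%classic `<=` @I01 R.
  by move=> x; rewrite /= in_itv /= /I01 /= => /andP[x0 x1]; apply/andP; split; lra.
have sub2 : `[1/2, 1]%classic `<=` @I01 R.
  by move=> x; rewrite /= in_itv /= /I01 /= => /andP[x0 x1]; apply/andP; split; lra.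
have [s1 s1i ps1] : exists2 s1, s1 \in `[0, 1/2] & phi s1 = c.
  apply: IVT; first lra; first exact: continuous_subspaceW sub1 cphi.
  exact: mid.
have [s2 s2i ps2] : exists2 s2, s2 \in `[1/2, 1] & phi s2 = c.
  apply: IVT; first lra; first exact: continuous_subspaceW sub2 cphi.
  rewrite -p01 /c addrC; exact: mid.
move: s1i s2i; rewrite !in_itv /= => /andP[s10 s11] /andP[s20 s21].
have ne : phi (1/2) <> phi 0 by apply/eqP.
have s1h : s1 != 1/2.
  by apply/eqP => e; move: ps1; rewrite e /c => E; apply: ne; lra.
have s2h : s2 != 1.
  by apply/eqP => e; move: ps2; rewrite e -p01 /c => E; apply: ne; lra.
have I1s0 : @I01 R s1 by apply: sub1; rewrite /= in_itv /= s10 s11.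
have I2s0 : @I01 R s2 by apply: sub2; rewrite /= in_itv /= s20 s21.
have [I1s gs1] := Hphi s1 I1s0.
have [I2s gs2] := Hphi s2 I2s0.
have E : h s1 = h s2 by rewrite -gs1 -gs2 ps1 ps2.
have H1 : 0 <= s1 < 1.
  by apply/andP; split => //; move: s1h; rewrite lt_neqAle => ?; lra.
have H2 : 0 <= s2 < 1.
  apply/andP; split; first lra.
  by rewrite lt_neqAle s2h s21.
have := ih _ _ H1 H2 E.
move: s1h; rewrite neq_lt => /orP[] ?; lra.
Qed.

Section Ann.
Variable A : tri_data R.
Hypothesis HA : is_comb_annulus A.
Local Notation V := (tV A).
Local Notation adj := (tadj A).

Lemma adj_sym : symmetric adj.
Proof. by case: HA. Qed.
Lemma adj_irr : irreflexive adj.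
Proof. by case: HA => _ [H _]; exact: H. Qed.
Lemma pos_Om v : tOm A (tpos A v).
Proof. by case: HA => _ [_ [_ [H _]]]; exact: H. Qed.
Lemma arc_prop x y : adj x y ->
  [/\ is_arc (tarc A x y), tarc A x y 0 = tpos A x,
      tarc A x y 1 = tpos A y, edge_img x y = edge_img y x
    & edge_img x y `<=` tOm A].
Proof. by case: HA => _ [_ [_ [_ [H _]]]]; exact: H. Qed.
Lemma edge_novert x y z : adj x y -> edge_img x y (tpos A z) -> z = x \/ z = y.
Proof. by case: HA => _ [_ [_ [_ [_ [H _]]]]]; exact: H. Qed.
Lemma edge_meet x y u v p : adj x y -> adj u v -> edge_img x y p -> edge_img u v p ->
   [set x; y]%SET = [set u; v]%SET \/ (exists z, p = tpos A z).
Proof. by case: HA => _ [_ [_ [_ [_ [_ [H _]]]]]]; exact: H. Qed.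
Lemma face_tri (f : {set V}) : f \in tF A -> #|f| = 3 /\ {in f &, forall x y, x != y -> adj x y}.
Proof. by case: HA => _ [_ [_ [_ [_ [_ [_ [H _]]]]]]]; exact: H. Qed.
Lemma face_int_prop (f : {set V}) : f \in tF A ->
   (forall z, ~ face_int f (tpos A z)) /\
   (forall x y, adj x y -> face_int f `&` edge_img x y = set0).
Proof. by case: HA => _ [_ [_ [_ [_ [_ [_ [_ [_ [H _]]]]]]]]]; exact: H. Qed.
Lemma face_disj (f : {set V}) g : f \in tF A -> g \in tF A -> f != g -> face_int f `&` face_int g = set0.
Proof. by case: HA => _ [_ [_ [_ [_ [_ [_ [_ [_ [_ [H _]]]]]]]]]]; exact: H. Qed.
Lemma cover_Om : tOm A = \bigcup_(f in [set` tF A]) face_region f.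
Proof. by case: HA => _ [_ [_ [_ [_ [_ [_ [_ [_ [_ [_ [H _]]]]]]]]]]]; exact: H. Qed.
Lemma ann_prop : closed_annulus (tOm A) (tJin A) (tJout A).
Proof. by case: HA => _ [_ [_ [_ [_ [_ [_ [_ [_ [_ [_ [_ H]]]]]]]]]]]; exact: H. Qed.

Lemma edge_closed x y : adj x y -> closed (edge_img x y).
Proof. by case/arc_prop => -[c _] _ _ _ _; exact: arc_closed. Qed.

Lemma face_curveE (f : {set V}) : face_curve f =
  \bigcup_(xy in [set xy : V * V | [/\ xy.1 \in f, xy.2 \in f & adj xy.1 xy.2]])
     edge_img xy.1 xy.2.
Proof.
apply/seteqP; split.
  by move=> p [x [y [xf yf axy e]]]; exists (x, y).
by move=> p [[x y] /= [xf yf axy] e]; exists x, y.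
Qed.

Lemma face_curve_closed (f : {set V}) : closed (face_curve f).
Proof.
rewrite face_curveE; apply: closed_bigcup; first exact: finite_finset.
by move=> [x y] /= [_ _ axy]; exact: edge_closed.
Qed.

Lemma face_int_open (f : {set V}) : open (face_int f).
Proof. exact/inside_open/face_curve_closed. Qed.

Lemma face_region_closed (f : {set V}) : closed (face_region f).
Proof. exact/closed_inside_U/face_curve_closed. Qed.

Lemma face_region_Om f : f \in tF A -> face_region f `<=` tOm A.
Proof. by move=> fF p rp; rewrite cover_Om; exists f. Qed.

Lemma face_int_interior (f : {set V}) : f \in tF A -> face_int f `<=` (tOm A)°.
Proof.
move=> fF; rewrite -open_subsetE; last exact: face_int_open.
by move=> p ip; apply: (face_region_Om _ fF); right.
Qed.

Lemma region_vertex (f : {set V}) v : f \in tF A -> face_region f (tpos A v) -> v \in f.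
Proof.
move=> fF [[x [y [xf yf axy e]]]|fi]; last by case: (face_int_prop _ fF) => /(_ v).
by case: (edge_novert _ _ _ axy e) => ->.
Qed.

Lemma vertex_face v : exists2 f, f \in tF A & v \in f.
Proof.
have := pos_Om v; rewrite cover_Om => -[f fF rf].
by exists f => //; apply: region_vertex.
Qed.

Lemma region_meet (f g : {set V}) p : f \in tF A -> g \in tF A -> f != g ->
  face_region f p -> face_region g p -> exists z, z \in f /\ z \in g.
Proof.
move=> fF gF fg [[x [y [xf yf axy ex]]]|fi] [[u [v [uf vf auv eu]]]|gi].
- case: (edge_meet _ _ _ _ _ axy auv ex eu) => [E|[z pz]].
    exists x; split => //; have : x \in [set u; v]%SET by rewrite -E !inE eqxx.
    by rewrite !inE => /orP[]/eqP->.
  exists z; rewrite pz in ex eu; split.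
    by case: (edge_novert _ _ _ axy ex) => ->.
  by case: (edge_novert _ _ _ auv eu) => ->.
- case: (face_int_prop _ gF) => _ /(_ _ _ axy) E.
  by exfalso; move: E; apply/eqP/set0P; exists p.
- case: (face_int_prop _ fF) => _ /(_ _ _ auv) E.
  by exfalso; move: E; apply/eqP/set0P; exists p.
- by exfalso; move: (face_disj _ _ fF gF fg); apply/eqP/set0P; exists p.
Qed.

Lemma set2_cases (x y u v : V) : x != y -> [set x; y]%SET = [set u; v]%SET ->
  (x = u /\ y = v) \/ (x = v /\ y = u).
Proof.
move=> xy E.
have : x \in [set u; v]%SET by rewrite -E !inE eqxx.
have : y \in [set u; v]%SET by rewrite -E !inE eqxx orbT.
rewrite !inE => /orP[]/eqP yE /orP[]/eqP xE.
- by move: xy; rewrite xE yE eqxx.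
- by right.
- by left.
- by move: xy; rewrite xE yE eqxx.
Qed.

Lemma same_edge_img x y u v : adj x y -> [set x; y]%SET = [set u; v]%SET ->
  edge_img x y = edge_img u v.
Proof.
move=> axy E; have xy : x != y by apply/eqP => e; move: axy; rewrite e adj_irr.
case: (set2_cases _ _ _ _ xy E) => -[<- <-] //.
by case: (arc_prop _ _ axy).
Qed.

Lemma sep_closed (X Y : set pt) : closed X -> closed Y -> X `&` Y = set0 -> separated X Y.
Proof.
move=> cX cY XY; rewrite /separated.
by rewrite -(iffLR (closure_id X) cX) -(iffLR (closure_id Y) cY).
Qed.

Lemma bd_sub_edges (J : set pt) : J `<=` tOm A `\` (tOm A)° ->
  forall q, J q -> exists x y, adj x y /\ edge_img x y q.
Proof.
move=> sJ q Jq; have [Omq nint] := sJ q Jq.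
move: Omq; rewrite cover_Om => -[f fF [[x [y [_ _ axy e]]]|fi]].
  by exists x, y.
by exfalso; apply: nint; exact: (face_int_interior _ fF).
Qed.

Lemma vertex_on (J : set pt) : jordan_curve J -> J `<=` tOm A `\` (tOm A)° ->
  exists v, J (tpos A v).
Proof.
move=> jJ sJ; apply: contrapT => nv.
have nv' v : ~ J (tpos A v) by move=> Jv; apply: nv; exists v.
have [h [ch h01 ih eJ]] := jJ.
have Jq0 : J (h 0) by rewrite eJ; exists 0 => //; rewrite /I01 /= lexx ler01.
have [x0 [y0 [a0 e0]]] := bd_sub_edges J sJ _ Jq0.
pose U := \bigcup_(xy in [set xy : V * V | adj xy.1 xy.2 /\
                    [set xy.1; xy.2]%SET != [set x0; y0]%SET]) edge_img xy.1 xy.2.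
have cJ : closed J by rewrite eJ; exact: arc_closed.
have cU : closed U.
  apply: closed_bigcup; first exact: finite_finset.
  by move=> [x y] /= [axy _]; exact: edge_closed.
have disj : (edge_img x0 y0 `&` J) `&` (U `&` J) = set0.
  apply/seteqP; split => // p [[ep Jp] [[[u v] /= [auv ne] eu] _]].
  case: (edge_meet _ _ _ _ _ a0 auv ep eu) => [E|[z pz]].
    by move: ne; rewrite E eqxx.
  by apply: (nv' z); rewrite -pz.
have : J `<=` (edge_img x0 y0 `&` J) `|` (U `&` J).
  move=> q Jq; have [x [y [axy eq]]] := bd_sub_edges J sJ _ Jq.
  have [E|ne] := eqVneq [set x; y]%SET [set x0; y0]%SET.
    by left; split => //; rewrite -(same_edge_img _ _ _ _ axy E).
  by right; split => //; exists (x, y).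
move/connected_subset => /(_ (sep_closed _ _ (closedI (edge_closed _ _ a0) cJ) (closedI cU cJ) disj)).
have cJ' : connected J by rewrite eJ; exact: arc_connected.
case/(_ cJ') => sub.
  case: (arc_prop _ _ a0) => arc _ _ _ _.
  apply: (jordan_not_in_arc _ J arc jJ) => q Jq; by case: (sub q Jq).
have := sub _ Jq0; case=> Ua Ja.
by move: disj; apply/eqP/set0P; exists (h 0).
Qed.

Lemma Om_connected : connected (tOm A).
Proof.
case: ann_prop => _ [OmE cI _]; rewrite OmE; exact: connected_closure.
Qed.

Lemma graph_conn u v : connect adj u v.
Proof.
apply: contrapT => /negP nc.
pose S1 := \bigcup_(f in [set f | f \in tF A /\ exists2 w, w \in f & connect adj u w])
            face_region f.
pose S2 := \bigcup_(f in [set f | f \in tF A /\ forall w, w \in f -> ~~ connect adj u w])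
            face_region f.
have cS1 : closed S1.
  by apply: closed_bigcup; [exact: finite_finset| move=> f _; exact: face_region_closed].
have cS2 : closed S2.
  by apply: closed_bigcup; [exact: finite_finset| move=> f _; exact: face_region_closed].
have in_face f w z : f \in tF A -> w \in f -> z \in f -> connect adj u w -> connect adj u z.
  move=> fF wf zf cw; have [_ adjf] := face_tri _ fF.
  have [e|wz] := eqVneq w z; first by rewrite -e.
  by apply: connect_trans cw (connect1 (adjf _ _ wf zf wz)).
have disj : S1 `&` S2 = set0.
  apply/seteqP; split => // p [[f [fF [w wf cw]] rf] [g [gF ng] rg]].
  have fg : f != g by apply/eqP => e; move: (ng w); rewrite -e => /(_ wf); rewrite cw.
  have [z [zf zg]] := region_meet _ _ _ fF gF fg rf rg.
  by move: (ng z zg); rewrite (in_face f w z).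
have : tOm A `<=` S1 `|` S2.
  move=> p; rewrite cover_Om => -[f fF rf].
  have [[w wf cw]|nw] := pselect (exists2 w, w \in f & connect adj u w).
    by left; exists f => //; split => //; exists w.
  right; exists f => //; split => // w wf; apply/negP => cw; apply: nw; by exists w.
move/connected_subset => /(_ (sep_closed _ _ cS1 cS2 disj) Om_connected) [] sub.
  have [f [fF [w wf cw]] rf] := sub _ (pos_Om v).
  by have := in_face f w v fF wf (region_vertex _ _ fF rf) cw; rewrite (negbTE nc).
have [f [fF ng] rf] := sub _ (pos_Om u).
by move: (ng u (region_vertex _ _ fF rf)); rewrite connect0.
Qed.

Lemma exists_connecting : exists v0 p, connecting adj (@bd_in R A) (@bd_out R A) v0 p.
Proof.
case: ann_prop => [[jin jout _ _] [_ _ bd]].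
have [vi Ji] : exists v, tJin A (tpos A v).
  by apply: vertex_on => // q Jq; rewrite bd; left.
have [vo Jo] : exists v, tJout A (tpos A v).
  by apply: vertex_on => // q Jq; rewrite bd; right.
have /connectP [p pp lp] := graph_conn vi vo.
by exists vi, p; split => //; rewrite /bd_out /= -lp.
Qed.

End Ann.
End Topo.
Set Implicit Arguments.
Unset Strict Implicit.
Section Walks.
Variable T : finType.
Variable r : rel T.

Definition edges (a : T) (s : seq T) : seq {set T} :=
  pairmap (fun u w => [set u; w]%SET) a s.

Lemma edges_cons a x s : edges a (x :: s) = [set a; x]%SET :: edges x s.
Proof. by []. Qed.

Lemma edges_rcons a s x : edges a (rcons s x) = rcons (edges a s) [set last a s; x]%SET.
Proof. by rewrite /edges -cats1 pairmap_cat cats1. Qed.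

Lemma edges_is_edge a s : path r a s -> forall e, e \in edges a s -> is_edge r e.
Proof.
elim: s a => [//|x s IH] a /= /andP[rax ps] e; rewrite inE => /orP[/eqP->|].
  by apply/existsP; exists a; apply/existsP; exists x; rewrite rax eqxx.
exact: IH.
Qed.

Lemma edges_mem a s e : e \in edges a s -> exists u w, [/\ e = [set u; w]%SET, u \in a :: s & w \in a :: s].
Proof.
elim: s a => [//|x s IH] a; rewrite edges_cons inE => /orP[/eqP->|].
  by exists a, x; rewrite !inE !eqxx orbT.
move/IH => [u [w [-> us ws]]]; exists u, w; split => //; rewrite inE; apply/orP; right => //.
Qed.

Lemma uniq_edges a s : uniq (a :: s) -> uniq (edges a s).
Proof.
elim: s a => [//|x s IH] a /= /andP[]; rewrite inE negb_or => /andP[ax as_] /andP[xs us].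
rewrite IH ?andbT; last by rewrite /= xs us.
apply/negP => /edges_mem [u [w [E us' ws']]].
have : a \in [set u; w]%SET by rewrite -E !inE eqxx.
by rewrite !inE => /orP[]/eqP e; [move: us'|move: ws']; rewrite -e inE (negbTE ax) (negbTE as_).
Qed.

Lemma short_walk a s : path r a s -> exists s',
  [/\ path r a s', last a s' = last a s, uniq (a :: s'),
      {subset edges a s' <= edges a s} & {subset s' <= s}].
Proof.
move: {2}(size s) (leqnn (size s)) => n; elim: n a s => [|n IH] a s.
  by rewrite leqn0 => /nilP -> _; exists [::].
case: s => [|x s] sz ps; first by exists [::].
have [ain|anin] := boolP (a \in x :: s).
  move: ps sz; case/splitPr: ain => s1 s2 ps sz.
  move: ps; rewrite cat_path => /andP[_] /= /andP[_ ps2].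
  have sz2 : (size s2 <= n)%N.
    by move: sz; rewrite size_cat /= addnS ltnS => /(leq_trans _)-> //; rewrite leq_addl.
  have [s' [p' l' u' e' v']] := IH a s2 sz2 ps2.
  exists s'; split => //.
  - by rewrite l' last_cat /=.
  - move=> e /e' es2; rewrite /edges pairmap_cat mem_cat; apply/orP; right => /=.
    by rewrite inE es2 orbT.
  - by move=> v /v' vs2; rewrite mem_cat inE vs2 !orbT.
move: ps => /= /andP[rax ps].
have [s' [p' l' u' e' v']] := IH x s sz ps.
exists (x :: s'); split => //=.
- by rewrite rax p'.
- rewrite [uniq _]/= in u'; rewrite u' andbT; apply/negP => ain; apply: (negP anin).
  move: ain; rewrite inE => /orP[/eqP->|/v' H]; first by rewrite inE eqxx.
  by rewrite inE H orbT.
- move=> e; rewrite /= !inE => /orP[->//|H]; apply/orP; right; exact: e' H.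
- move=> v; rewrite !inE => /orP[->//|H]; apply/orP; right; exact: v' H.
Qed.

Hypothesis rsym : symmetric r.

Lemma rev_walk a s : path r a s -> exists s',
  [/\ path r (last a s) s', last (last a s) s' = a & {subset edges (last a s) s' <= edges a s}].
Proof.
elim: s a => [|x s IH] a /=; first by exists [::].
move=> /andP[rax ps]; have [s' [p' l' e']] := IH x ps.
exists (rcons s' a); split.
- by rewrite rcons_path p' l' rsym.
- by rewrite last_rcons.
- move=> e; rewrite edges_rcons mem_rcons inE l' => /orP[/eqP->|H].
    by rewrite /= inE finset.setUC eqxx.
  by rewrite /= inE (e' _ H) orbT.
Qed.

End Walks.

Lemma set2_casesT (T : finType) (x y u v : T) : x != y -> [set x; y]%SET = [set u; v]%SET ->
  (x = u /\ y = v) \/ (x = v /\ y = u).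
Proof.
move=> xy E.
have : x \in [set u; v]%SET by rewrite -E !inE eqxx.
have : y \in [set u; v]%SET by rewrite -E !inE eqxx orbT.
rewrite !inE => /orP[]/eqP yE /orP[]/eqP xE.
- by move: xy; rewrite xE yE eqxx.
- by right.
- by left.
- by move: xy; rewrite xE yE eqxx.
Qed.

Lemma sum_uniq_le (R : realType) (T : finType) (m : T -> R) (l : seq T) (S : {set T}) :
  uniq l -> {subset l <= S} -> (forall e, e \in S -> 0 <= m e) ->
  \sum_(e <- l) m e <= \sum_(e in S) m e.
Proof.
move=> ul lS m0; rewrite big_uniq // [X in _ <= X](bigID (fun e => e \in l)) /=.
rewrite -[X in X <= _]addr0 lerD //; last by apply: sumr_ge0 => e /andP[/m0].
by rewrite le_eqVlt; apply/orP; left; apply/eqP; apply: eq_bigl => e; case: (boolP (e \in l)) => [/lS ->|]; rewrite ?andbT ?andbF.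
Qed.

Lemma cs_ineq (R : realType) (T : finType) (S : {set T}) (a : T -> R) :
  (\sum_(i in S) a i) ^+ 2 <= #|S|%:R * \sum_(i in S) a i ^+ 2.
Proof.
have key i j : a i * a j <= (a i ^+ 2 + a j ^+ 2) / 2.
  have := sqr_ge0 (a i - a j); rewrite sqrrB => H; lra.
rewrite expr2 mulr_suml; under eq_bigr do rewrite mulr_sumr.
apply: le_trans (ler_sum _ (fun i _ => ler_sum _ (fun j _ => key i j))) _.
have E : \sum_(i in S) \sum_(j in S) (a i ^+ 2 + a j ^+ 2) / 2 =
   \sum_(i in S) (#|S|%:R * a i ^+ 2 + \sum_(j in S) a j ^+ 2) / 2.
  apply: eq_bigr => i _; rewrite -big_distrl /= big_split /= sumr_const mulr_natl.
  by [].
rewrite E -big_distrl big_split /= -mulr_sumr sumr_const -mulr_natl.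
set X := \sum_(i in S) a i ^+ 2; set c := (#|S|%:R : R).
rewrite le_eqVlt; apply/orP; left; apply/eqP; lra.
Qed.

Section Comb.
Variable R : realType.
Variables (A rA : tri_data R).
Local Notation V := (tV A).
Local Notation W := (tV rA).
Local Notation adjA := (tadj A).
Local Notation adjW := (tadj rA).
Variables (iota : V -> W) (rp : V -> V -> seq W).
Hypothesis symW : symmetric adjW.
Hypothesis irrA : irreflexive adjA.
Hypothesis Hpath : forall x y, adjA x y ->
  path adjW (iota x) (rp x y) /\ last (iota x) (rp x y) = iota y.

Definition Inc x y : {set {set W}} := [set e in edges (iota x) (rp x y)].
Definition ori (e : {set V}) : option (V * V) :=
  [pick xy : V * V | adjA xy.1 xy.2 && (e == [set xy.1; xy.2]%SET)].

Variable m : {set W} -> R.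
Hypothesis m_ge0 : forall e, is_edge adjW e -> 0 <= m e.

Definition M (e : {set V}) : R :=
  if ori e is Some xy then \sum_(e' in Inc xy.1 xy.2) m e' else 0.

Lemma Inc_edge x y : adjA x y -> forall e, e \in Inc x y -> is_edge adjW e.
Proof. by case/Hpath => p _ e; rewrite inE => H; exact: (edges_is_edge p H). Qed.

Lemma M_ge0 e : 0 <= M e.
Proof.
rewrite /M /ori; case: pickP => // -[x y] /andP[/= axy _].
by apply: sumr_ge0 => e' /(Inc_edge axy); exact: m_ge0.
Qed.

Lemma good_walk x y : adjA x y -> exists s,
  [/\ path adjW (iota x) s, last (iota x) s = iota y &
      \sum_(e <- edges (iota x) s) m e <= M [set x; y]%SET].
Proof.
move=> axy; rewrite /M /ori; case: pickP => [[x' y'] /= /andP[axy' /eqP E]|]; last first.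
  by move/(_ (x, y)); rewrite /= axy eqxx.
have xy : x != y by apply/eqP => e; move: axy; rewrite e irrA.
have [s0 [p0 l0 e0]] : exists s0, [/\ path adjW (iota x) s0, last (iota x) s0 = iota y &
    {subset edges (iota x) s0 <= edges (iota x') (rp x' y')}].
  case: (set2_casesT xy E) => -[ex ey]; subst x' y'.
    by case: (Hpath axy) => p l; exists (rp x y); split.
  case: (Hpath axy') => p l.
  have [s' [p' l' e']] := rev_walk symW p.
  by rewrite l in p' l' e'; exists s'; split.
have [s [ps ls us es _]] := short_walk p0.
exists s; split => //; first by rewrite ls.
apply: sum_uniq_le; first exact: uniq_edges.
  by move=> e /es /e0 H; rewrite inE.
by move=> e /(Inc_edge axy'); exact: m_ge0.
Qed.

Lemma walk_A v0 p : path adjA v0 p -> exists s,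
  [/\ path adjW (iota v0) s, last (iota v0) s = iota (last v0 p) &
      path_len m (iota v0) s <= path_len M v0 p].
Proof.
elim: p v0 => [|x p IH] v0 /=.
  by move=> _; exists [::]; split => //; rewrite /path_len /= !big_nil.
move=> /andP[a ps]; have [s1 [p1 l1 e1]] := good_walk a.
have [s2 [p2 l2 e2]] := IH x ps.
exists (s1 ++ s2); split.
- by rewrite cat_path p1 l1 p2.
- by rewrite last_cat l1 l2.
- rewrite /path_len pairmap_cat big_cat l1 /= big_cons lerD //.
Qed.

Variable b : nat.
Hypothesis Hcard : forall x y, adjA x y -> (#|Inc x y| <= b)%N.
Hypothesis Inc_disj : forall x y u v, adjA x y -> adjA u v ->
  [set x; y]%SET != [set u; v]%SET -> forall e, e \in Inc x y -> e \notin Inc u v.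

Definition IncO (e : {set V}) : {set {set W}} :=
  if ori e is Some xy then Inc xy.1 xy.2 else finset.set0.

Lemma ME e : M e = \sum_(e' in IncO e) m e'.
Proof. by rewrite /M /IncO; case: (ori e) => //; rewrite big_set0. Qed.

Lemma IncO_card e : (#|IncO e| <= b)%N.
Proof.
rewrite /IncO /ori; case: pickP => [[x y] /andP[/= axy _]|_]; first exact: Hcard.
by rewrite cards0.
Qed.

Lemma IncO_edge e e' : e' \in IncO e -> is_edge adjW e'.
Proof.
rewrite /IncO /ori; case: pickP => [[x y] /andP[/= axy _]|_]; first exact: Inc_edge.
by rewrite inE.
Qed.

Lemma IncO_uniq e1 e2 e' : e' \in IncO e1 -> e' \in IncO e2 -> e1 = e2.
Proof.
rewrite /IncO /ori; case: pickP => [[x1 y1] /andP[/= a1 /eqP E1]|_]; last by rewrite inE.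
case: pickP => [[x2 y2] /andP[/= a2 /eqP E2]|_]; last by move=> _; rewrite inE.
move=> i1 i2; apply/eqP; apply: contraT => ne.
have ne' : [set x1; y1]%SET != [set x2; y2]%SET by rewrite -E1 -E2.
by move: (Inc_disj a1 a2 ne' i1); rewrite i2.
Qed.

Lemma area_bound : area adjA M <= b%:R * area adjW m.
Proof.
rewrite /area.
apply: le_trans (_ : \sum_(e | is_edge adjA e) b%:R * \sum_(e' in IncO e) m e' ^+ 2 <= _).
  apply: ler_sum => e _; rewrite ME; apply: le_trans (cs_ineq _ _) _.
  apply: ler_wpM2r; first by apply: sumr_ge0 => *; exact: sqr_ge0.
  by rewrite ler_nat IncO_card.
rewrite -mulr_sumr; apply: ler_wpM2l; first exact: ler0n.
rewrite (exchange_big_dep predT) //= [X in _ <= X]big_mkcond /=.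
apply: ler_sum => e' _.
case: (pickP (fun e => is_edge adjA e && (e' \in IncO e))) => [e1 /andP[ie1 in1]|none].
  rewrite (bigD1 e1) /=; last by rewrite ie1 in1.
  rewrite big1 ?addr0 ?(IncO_edge in1) //.
  move=> e /andP[/andP[_ ine] ne]; exfalso; move: ne.
  by rewrite (IncO_uniq ine in1) eqxx.
rewrite big_pred0; last by move=> e; rewrite none.
by case: ifP => _ //; exact: sqr_ge0.
Qed.

End Comb.

Lemma path_len_ge0 (R : realType) (V : finType) (r : rel V) (mm : {set V} -> R) a s :
  (forall e, is_edge r e -> 0 <= mm e) -> path r a s -> 0 <= path_len mm a s.
Proof.
move=> m0 ps; rewrite /path_len big_seq; apply: sumr_ge0 => e es.
exact/m0/(edges_is_edge ps es).
Qed.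

Lemma arc_not_finite (R : realType) (V : finType) (pos : V -> pt R) (g : R -> pt R) :
  is_arc g -> arc_img g `<=` range pos -> False.
Proof.
move=> [cg ig] sub.
pose N := #|V|.+1.
have N0 : (N%:R : R) != 0 by rewrite pnatr_eq0.
have tI (k : 'I_N) : @I01 R (k%:R / N%:R).
  rewrite /I01 /=; apply/andP; split; first by rewrite divr_ge0 ?ler0n.
  by rewrite ler_pdivrMr ?ltr0n // mul1r ler_nat ltnW.
have ex (k : 'I_N) : exists z, pos z = g (k%:R / N%:R).
  by have [z _ E] := sub (g (k%:R / N%:R)) (ex_intro2 _ _ _ (tI k) erefl); exists z.
have [f Hf] := choice ex.
have inj : injective f.
  move=> k l fkl; have : g (k%:R / N%:R) = g (l%:R / N%:R) by rewrite -!Hf fkl.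
  move/(ig _ _ (tI k) (tI l))/(congr1 (fun t => t * N%:R)).
  rewrite !divfK // => /eqP; rewrite eqr_nat => /eqP; exact: val_inj.
by have := leq_card f inj; rewrite card_ord ltnn.
Qed.

Lemma inc_mem (R : realType) (A rA : tri_data R) (iota : tV A -> tV rA) rp x y e :
  path (tadj rA) (iota x) (rp x y) ->
  edge_img x y = \bigcup_(i in [set i | (i < size (rp x y))%N])
             edge_img (nth (iota x) (iota x :: rp x y) i) (nth (iota x) (rp x y) i) ->
  e \in Inc iota rp x y ->
  exists a c, [/\ e = [set a; c]%SET, tadj rA a c & edge_img a c `<=` edge_img x y].
Proof.
move=> pxy Exy; rewrite inE => /(nthP e) [i]; rewrite size_pairmap => ilt.
rewrite (nth_pairmap (iota x)) // => <-.
exists (nth (iota x) (iota x :: rp x y) i), (nth (iota x) (rp x y) i); split => //.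
  by move/(pathP (iota x)): pxy => /(_ i ilt).
by rewrite Exy => q Eq; exists i.
Qed.

Lemma inc_disj (R : realType) (A rA : tri_data R) (iota : tV A -> tV rA) rp :
  is_comb_annulus A -> is_comb_annulus rA ->
  (forall x y, tadj A x y -> path (tadj rA) (iota x) (rp x y) /\
     edge_img x y = \bigcup_(i in [set i | (i < size (rp x y))%N])
             edge_img (nth (iota x) (iota x :: rp x y) i) (nth (iota x) (rp x y) i)) ->
  forall x y u v, tadj A x y -> tadj A u v -> [set x; y]%SET != [set u; v]%SET ->
  forall e, e \in Inc iota rp x y -> e \notin Inc iota rp u v.
Proof.
move=> HA HrA H x y u v axy auv ne e ie; apply/negP => ie'.
have [pxy Exy] := H _ _ axy; have [puv Euv] := H _ _ auv.
have [a [c [ea aac sac]]] := inc_mem pxy Exy ie.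
have [a' [c' [ea' aac' sac']]] := inc_mem puv Euv ie'.
have Eimg : edge_img a c = edge_img a' c'.
  by apply: (same_edge_img _ _ HrA) => //; rewrite -ea -ea'.
case: (arc_prop _ _ HrA _ _ aac) => arc _ _ _ _.
apply: (@arc_not_finite R (tV A) (tpos A) (tarc rA a c) arc) => q Eq.
have q1 := sac _ Eq; have q2 : edge_img u v q by apply: sac'; rewrite -Eimg.
case: (edge_meet _ _ HA _ _ _ _ _ axy auv q1 q2) => [E|[z ->]].
  by move: ne; rewrite E eqxx.
by exists z.
Qed.

Unset Implicit Arguments.
Local Open Scope ereal_scope.

Theorem mainTheorem4 (R : realType) (A rA : tri_data R) (b : nat) :
  is_comb_annulus A -> is_comb_annulus rA ->
  weakly_bounded_refinement A rA b ->
  EEL_ann rA <= ((b ^ 2)%:R)%:E * EEL_ann A.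
Proof.
move=> HA HrA [iota [rp [[inj posi [Om_eq Jin_eq Jout_eq]] Hrp]]].
have Hpath : forall x y, tadj A x y ->
    path (tadj rA) (iota x) (rp x y) /\ last (iota x) (rp x y) = iota y.
  by move=> x y /Hrp [].
have symW := adj_sym _ _ HrA.
have irrA := adj_irr _ _ HA.
have Hcard : forall x y, tadj A x y -> (#|Inc iota rp x y| <= b)%N.
  by move=> x y /Hrp [].
have Hdisj := inc_disj HA HrA (fun x y axy =>
   let: And5 p _ _ E _ := Hrp x y axy in conj p E).
have [v0 [p [pA inA outA]]] := exists_connecting _ _ HA.
have hEEL0 : 0 <= EEL_ann A.
  case: p pA inA outA => [|x p'] pA inA outA.
    exfalso; case: (ann_prop _ _ HA) => -[_ _ dis _] _.
    by move: dis; apply/eqP/set0P; exists (tpos A v0).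
  move: pA => /= /andP[a0 _].
  have ie : is_edge (tadj A) [set v0; x]%SET.
    by apply/existsP; exists v0; apply/existsP; exists x; rewrite a0 eqxx.
  pose one := fun _ : {set tV A} => (1%R : R).
  have a1 : (0 < area (tadj A) one)%R.
    rewrite /area (bigD1 [set v0; x]%SET) //= expr1n.
    rewrite ltr_pwDl //; exact: sumr_ge0 => *; exact: sqr_ge0.
  apply: le_trans (_ : ((min_len (tadj A) (@bd_in R A) (@bd_out R A) one) ^+ 2
                       / area (tadj A) one)%:E <= _).
    by rewrite lee_fin; apply: divr_ge0; [exact: sqr_ge0| exact: ltW].
  apply: ereal_sup_ubound; exists one => //; split; last by rewrite gt_eqF.
  by move=> e _; exact: ler01.
rewrite /EEL_ann /EEL; apply: ub_ereal_sup => _ [m [m0 am] <-].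
set Mm := M iota rp m.
have Mm0 : forall e, (0 <= Mm e)%R := M_ge0 Hpath m0.
have areaB := area_bound Hpath m Hcard Hdisj.
set SetA := [set l | exists v0 p, connecting (tadj A) (@bd_in R A) (@bd_out R A) v0 p
                                 /\ l = path_len Mm v0 p].
set SetW := [set l | exists v0 p, connecting (tadj rA) (@bd_in R rA) (@bd_out R rA) v0 p
                                 /\ l = path_len m v0 p].
have -> : min_len (tadj rA) (@bd_in R rA) (@bd_out R rA) m = inf SetW by [].
have cW : forall a q, connecting (tadj A) (@bd_in R A) (@bd_out R A) a q ->
    exists s, connecting (tadj rA) (@bd_in R rA) (@bd_out R rA) (iota a) s /\
      (path_len m (iota a) s <= path_len Mm a q)%R.
  move=> a q [pq ia oa]; have [s [ps ls les]] := walk_A symW irrA Hpath m0 pq.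
  exists s; split => //; split => //.
    by rewrite /bd_in /= posi Jin_eq.
  by rewrite /bd_out /= ls posi Jout_eq.
have SA0 : SetA !=set0 by exists (path_len Mm v0 p); exists v0, p; split => //; split.
have SW0 : SetW !=set0.
  have [s [cs _]] := cW v0 p (And3 pA inA outA).
  by exists (path_len m (iota v0) s); exists (iota v0), s.
have lbW : lbound SetW 0%R.
  move=> _ [a [q [[pq _ _] ->]]]; exact: path_len_ge0 m0 pq.
have hW : has_lbound SetW by exists 0%R.
have minW0 : (0 <= inf SetW)%R := lb_le_inf SW0 lbW.
have minWA : (inf SetW <= inf SetA)%R.
  apply: (lb_le_inf SA0). move=> _ [a [q [cq ->]]].
  have [s [cs les]] := cW a q cq.
  apply: le_trans les; apply: (ge_inf hW); by exists (iota a), s.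
have am0 : (0 < area (tadj rA) m)%R.
  by rewrite lt_def am /=; apply: sumr_ge0 => *; exact: sqr_ge0.
have bb : ((b%:R : R) <= (b ^ 2)%:R)%R.
  by rewrite ler_nat; case: (b) => // n; rewrite expnS expn1 leq_pmulr.
case: (eqVneq (area (tadj A) Mm) 0%R) => [aM0|aMn0].
  have Me0 e : is_edge (tadj A) e -> Mm e = 0%R.
    move=> ie; apply/eqP; rewrite -sqrf_eq0; apply/eqP.
    exact: (psumr_eq0P (fun e _ => sqr_ge0 (Mm e)) aM0 ie).
  have pl0 a q : path (tadj A) a q -> path_len Mm a q = 0%R.
    move=> pq; rewrite /path_len big_seq big1 // => e es; apply: Me0.
    exact: (edges_is_edge pq es).
  have SAE : SetA = [set 0%R].
    apply/seteqP; split => [_ [a [q [[pq _ _] ->]]]|_ ->]; first exact: pl0.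
    by exists v0, p; split; [split| rewrite pl0].
  have W0 : inf SetW = 0%R.
    by apply/eqP; rewrite eq_le minW0 andbT; move: minWA; rewrite SAE inf1.
  rewrite W0 expr0n /= mul0r; apply: mule_ge0 => //; by rewrite lee_fin ler0n.
have admM : admissible_metric (tadj A) Mm by split => // e _; exact: Mm0.
have hM : ((inf SetA ^+ 2 / area (tadj A) Mm)%:E <= EEL_ann A).
  by apply: ereal_sup_ubound; exists Mm.
apply: le_trans (lee_pmul _ _ (lexx _) hM); first last.
- by rewrite lee_fin; apply: divr_ge0; [exact: sqr_ge0| apply: sumr_ge0 => *; exact: sqr_ge0].
- by rewrite lee_fin ler0n.
rewrite -EFinM lee_fin.
set x := inf SetW; set y := inf SetA; set am1 := area (tadj rA) m; set aM := area (tadj A) Mm.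
set B := ((b ^ 2)%:R : R).
have aM0 : (0 < aM)%R by rewrite lt_def aMn0 /=; apply: sumr_ge0 => *; exact: sqr_ge0.
set q := (y ^+ 2 / aM)%R.
have q0 : (0 <= q)%R by rewrite divr_ge0 // ?sqr_ge0 // ltW.
have yq : (y ^+ 2 = q * aM)%R by rewrite /q divfK // gt_eqF.
have aMB : (aM <= B * am1)%R.
  apply: le_trans areaB _; apply: ler_wpM2r => //; exact: ltW.
have h1 : (q * aM <= q * (B * am1))%R by apply: ler_wpM2l.
have h2 : (x ^+ 2 <= y ^+ 2)%R by nra.
rewrite ler_pdivrMr //; apply: (le_trans h2); rewrite yq; apply: (le_trans h1); by rewrite mulrA (mulrC q B).
Qed.
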